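(* Let $\Sigma$ be a set of constant symbols with $\star\notin\Sigma$ and $O\in\mathrm{Matr}_\Sigma(\mathcal O)$ an observation. Then $\mathcal L(O)=\{W\in\Sigma^*:\ \text{there exists a tuple }p\text{ of pairwise distinct constants of }\mathbf P\text{ (of length }|W|+1)\text{ such that }O\bar W_p\text{ is nilpotent}\}$.
   Context: Terms: first-order terms built from an infinite set of variables, a binary function symbol $\bullet$ written infix (not associative; by convention right-associating, $t\bullet u\bullet v:=t\bullet(u\bullet v)$), infinitely many constant symbols including a distinguished constant $\star$, and for each $n\ge1$ at least one $n$-ary function symbol. $\mathrm{var}(t)$ is the set of variables of $t$. The height of an occurrence of a variable in $t$ is its distance from the root of the tree of $t$. A renaming is a bijective substitution mapping variables to variables. A flow is a pair of terms written $t\leftarrow u$ with $\mathrm{var}(t)\subseteq\mathrm{var}(u)$, considered up to renaming. The product of flows $u\leftarrow v$ and $t\leftarrow w$ (representatives chosen with disjoint variable sets) is defined iff $v$ and $t$ are unifiable, and then equals $u\theta\leftarrow w\theta$ with $\theta$ a most general unifier of $v,t$. A wiring is a finite set of flows, written as a formal sum, with $0$ the empty wiring; product $FG=\{fg: f\in F,g\in G, fg\text{ defined}\}$, $F^n$ the $n$-fold product. $F$ is nilpotent if $F^n=0$ for some $n\in\mathbb N$. A flow $t\leftarrow u$ is balanced if for every variable $x$, all occurrences of $x$ in $t$ and in $u$ have the same height; $\mathcal B$ is the set of wirings all of whose flows are balanced. A semiring is a set of wirings containing $0$ and closed under finite sums (unions) and products. Tensor product of flows (variables renamed apart): $(u\leftarrow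 v)\otimes(t\leftarrow w):=u\bullet t\leftarrow v\bullet w$; extended to wirings by $(\sum_i f_i)\otimes(\sum_j g_j)=\sum_{i,j}f_i\otimes g_j$, and to semirings by $\mathcal A\otimes\mathcal B=\{\sum_i F_i\otimes G_i: F_i\in\mathcal A,G_i\in\mathcal B\}$, right-associating. For a set $E$ of closed terms, $\mathcal C(E)=\{\sum_i t_i\leftarrow u_i: t_i,u_i\in E\}$. For a set of symbols $\mathbf S$ and semiring $\mathcal A$, $\mathcal R_{\mathbf S}(\mathcal A)$ is the set of wirings of $\mathcal A$ not using symbols of $\mathbf S$. Fix disjoint infinite sets of constants $\mathbf P$ (position constants) and $\mathbf S$ (states), a unary function symbol $\mathrm M$, and constants $\mathrm L,\mathrm R$. The observation semiring is $\mathcal O:=\mathcal C(\mathbf S)\otimes\mathcal R_{\mathbf P}(\mathcal B)$. For a set of constants $\Sigma$ and semiring $\mathcal A$, $\mathrm{Matr}_\Sigma(\mathcal A):=\mathcal C(\Sigma\cup\{\star\})\otimes\mathcal C(\{\mathrm L,\mathrm R\})\otimes\mathcal A$. An observation over $\Sigma$ is any element of $\mathrm{Matr}_\Sigma(\mathcal O)$. Word representation: write $t\rightleftarrows u$ for $t\leftarrow u+u\leftarrow t$. For $W=c_1\cdots c_n$ over $\Sigma$ and pairwise distinct $p=(p_0,\dots,p_n)\in\mathbf P^{n+1}$, set $p_{n+1}=p_0$, $c_0=c_{n+1}=\star$, and, with $x,y$ variables, $\bar W_p=\sum_{i=0}^n\big(c_i\bullet\mathrm L\bullet x\bullet y\bullet\mathrm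 M(p_i)\ \rightleftarrows\ c_{i+1}\bullet\mathrm R\bullet x\bullet y\bullet\mathrm M(p_{i+1})\big)$. The language of $O$ is defined as $\mathcal L(O)=\{W\in\Sigma^*:\ O\bar W_p\text{ is nilpotent for every tuple }p\text{ of pairwise distinct constants of }\mathbf P\text{ of length }|W|+1\}$. *)

(* Defs.v *)
From Stdlib Require Import List Arith.
Import ListNotations.

(* Constants: the distinguished star, L, R, position constants P (CP n),
   states S (CS n), and infinitely many other constants (CO n). *)
Inductive const : Type :=
  | Star | CL | CR | CP (n : nat) | CS (n : nat) | CO (n : nat).

(* Terms: variables (nat), constants, the binary symbol "•" (Dot),
   and function symbols: Fn f args is the symbol (f, length args) applied
   to args, so there are infinitely many function symbols of each arity. *)
Inductive term : Type :=
  | Var (x : nat)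
  | Cst (c : const)
  | Dot (t u : term)
  | Fn (f : nat) (args : list term).

Definition M (t : term) : term := Fn 0 [t].

Fixpoint occ (x : nat) (t : term) (h : nat) {struct t} : Prop :=
  match t with
  | Var y => y = x /\ h = 0
  | Cst _ => False
  | Dot a b => match h with 0 => False | S h' => occ x a h' \/ occ x b h' end
  | Fn _ l => match h with
              | 0 => False
              | S h' => (fix occl (l : list term) : Prop :=
                           match l with
                           | [] => False
                           | a :: l' => occ x a h' \/ occl l'
                           end) l
              end
  end.

Definition var_in (x : nat) (t : term) : Prop := exists h, occ x t h.

Fixpoint usesP (t : term) : Prop :=
  match t with
  | Var _ => False
  | Cst (CP _) => True
  | Cst _ => False
  | Dot a b => usesP a \/ usesP b
  | Fn _ l => (fix usl (l : list term) : Prop :=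
                 match l with [] => False | a :: l' => usesP a \/ usl l' end) l
  end.

Fixpoint subst (th : nat -> term) (t : term) : term :=
  match t with
  | Var x => th x
  | Cst c => Cst c
  | Dot a b => Dot (subst th a) (subst th b)
  | Fn f l => Fn f (map (subst th) l)
  end.

Definition rename (s : nat -> nat) (t : term) : term := subst (fun x => Var (s x)) t.

Definition is_renaming (s : nat -> nat) : Prop :=
  exists r : nat -> nat, (forall x, r (s x) = x) /\ (forall x, s (r x) = x).

Definition unifier (th : nat -> term) (a b : term) : Prop := subst th a = subst th b.

Definition mgu (th : nat -> term) (a b : term) : Prop :=
  unifier th a b /\
  forall th', unifier th' a b -> exists eta, forall x, subst eta (th x) = th' x.

(* A flow t <- u is represented by the pair (t, u). *)
Definition flow := (term * term)%type.

Definition wf_flow (f : flow) : Prop := forall x, var_in x (fst f) -> var_in x (snd f).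

Definition flow_ren (f h : flow) : Prop :=
  exists s, is_renaming s /\ h = (rename s (fst f), rename s (snd f)).

(* h is (a representative of) the product (u <- v)(t <- w) *)
Definition flow_prod (f g h : flow) : Prop :=
  exists s1 s2, is_renaming s1 /\ is_renaming s2 /\
    (forall x, (var_in x (rename s1 (fst f)) \/ var_in x (rename s1 (snd f))) ->
               ~ (var_in x (rename s2 (fst g)) \/ var_in x (rename s2 (snd g)))) /\
    exists th, mgu th (rename s1 (snd f)) (rename s2 (fst g)) /\
      flow_ren (subst th (rename s1 (fst f)), subst th (rename s2 (snd g))) h.

Definition balanced (f : flow) : Prop :=
  forall x h1 h2,
    (occ x (fst f) h1 \/ occ x (snd f) h1) ->
    (occ x (fst f) h2 \/ occ x (snd f) h2) -> h1 = h2.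

(* A wiring is a finite set of flows (up to renaming), given by a list of
   representatives.  For products/powers we use the induced set of flows
   (a predicate closed under renaming). *)
Definition wiring := list flow.
Definition wset := flow -> Prop.

Definition of_list (F : wiring) : wset := fun h => exists f, In f F /\ flow_ren f h.

Definition wprod (A B : wset) : wset :=
  fun h => exists f g, A f /\ B g /\ flow_prod f g h.

(* wpow A n = A^(n+1) *)
Fixpoint wpow (A : wset) (n : nat) : wset :=
  match n with
  | 0 => A
  | S n' => wprod A (wpow A n')
  end.

Definition nilpotent (A : wset) : Prop := exists n, forall h, ~ wpow A n h.

Definition weq (F G : wiring) : Prop := forall h, of_list F h <-> of_list G h.

Definition is_wiring (F : wiring) : Prop := forall f, In f F -> wf_flow f.

Definition semiring := wiring -> Prop.

Definition tensor_flow (f g : flow) : flow :=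
  (Dot (rename (fun x => 2 * x) (fst f)) (rename (fun x => S (2 * x)) (fst g)),
   Dot (rename (fun x => 2 * x) (snd f)) (rename (fun x => S (2 * x)) (snd g))).

Definition tensorW (F G : wiring) : wiring :=
  concat (map (fun f => map (tensor_flow f) G) F).

Definition tensorS (A B : semiring) : semiring :=
  fun H => exists ps : list (wiring * wiring),
      (forall p, In p ps -> A (fst p) /\ B (snd p)) /\
      weq H (concat (map (fun p => tensorW (fst p) (snd p)) ps)).

Definition Csr (E : term -> Prop) : semiring :=
  fun H => forall f, In f H -> E (fst f) /\ E (snd f).

Definition Bal : semiring :=
  fun H => is_wiring H /\ forall f, In f H -> balanced f.

Definition RP (A : semiring) : semiring :=
  fun H => A H /\ forall f, In f H -> ~ usesP (fst f) /\ ~ usesP (snd f).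

Definition isState (t : term) : Prop := exists n, t = Cst (CS n).

Definition Obs : semiring := tensorS (Csr isState) (RP Bal).

Definition Matr (Sigma : const -> Prop) (A : semiring) : semiring :=
  tensorS (Csr (fun t => exists c, t = Cst c /\ (Sigma c \/ c = Star)))
          (tensorS (Csr (fun t => t = Cst CL \/ t = Cst CR)) A).

(* c_i for i = 0..n+1 : c_0 = c_{n+1} = ⋆ *)
Definition letter (W : list const) (i : nat) : const :=
  if i =? 0 then Star
  else if i =? S (length W) then Star
  else nth (i - 1) W Star.

(* p_i, with p_{n+1} = p_0; position constants are CP k, ps lists the k's *)
Definition pos (ps : list nat) (i : nat) : nat := nth (i mod (length ps)) ps 0.

Definition side (c lr : const) (pk : nat) : term :=
  Dot (Cst c) (Dot (Cst lr) (Dot (Var 0) (Dot (Var 1) (M (Cst (CP pk)))))).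

Definition Wbar (W : list const) (ps : list nat) : wiring :=
  concat (map (fun i =>
     let a := side (letter W i) CL (pos ps i) in
     let b := side (letter W (S i)) CR (pos ps (S i)) in
     [(a, b); (b, a)]) (seq 0 (S (length W)))).

Definition word_over (Sigma : const -> Prop) (W : list const) : Prop :=
  forall c, In c W -> Sigma c.

Definition inL (Sigma : const -> Prop) (O : wiring) (W : list const) : Prop :=
  word_over Sigma W /\
  forall ps : list nat, length ps = S (length W) -> NoDup ps ->
    nilpotent (wprod (of_list O) (of_list (Wbar W ps))).

(* Main.v *)
Require Import Defs.
From Stdlib Require Import List Arith Lia FinFun.
Import ListNotations.

Fixpoint term_ind' (P : term -> Prop) (Hv : forall x, P (Var x)) (Hc : forall c, P (Cst c))
  (Hd : forall a b, P a -> P b -> P (Dot a b)) (Hf : forall f l, Forall P l -> P (Fn f l))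
  (t : term) {struct t} : P t :=
  match t with
  | Var x => Hv x
  | Cst c => Hc c
  | Dot a b => Hd a b (term_ind' P Hv Hc Hd Hf a) (term_ind' P Hv Hc Hd Hf b)
  | Fn f l => Hf f l ((fix go (l : list term) : Forall P l :=
                        match l with
                        | [] => Forall_nil P
                        | a :: l' => Forall_cons a (term_ind' P Hv Hc Hd Hf a) (go l')
                        end) l)
  end.

Fixpoint cmap (s : nat -> nat) (t : term) : term :=
  match t with
  | Var x => Var x
  | Cst (CP n) => Cst (CP (s n))
  | Cst c => Cst c
  | Dot a b => Dot (cmap s a) (cmap s b)
  | Fn f l => Fn f (map (cmap s) l)
  end.

Lemma cmap_subst s th t :
  cmap s (subst th t) = subst (fun x => cmap s (th x)) (cmap s t).
Proof.
  induction t using term_ind'; simpl; auto.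
  - destruct c; reflexivity.
  - f_equal; auto.
  - f_equal. rewrite !map_map. apply map_ext_in. intros a Ha.
    rewrite Forall_forall in H. auto.
Qed.

Lemma cmap_comp s s' t : (forall n, s' (s n) = n) -> cmap s' (cmap s t) = t.
Proof.
  intro Hs. induction t using term_ind'; simpl; auto.
  - destruct c; simpl; auto. rewrite Hs; auto.
  - f_equal; auto.
  - f_equal. rewrite map_map. rewrite Forall_forall in H.
    transitivity (map (fun x => x) l); [apply map_ext_in; auto | apply map_id].
Qed.

Lemma usesP_Fn f l : usesP (Fn f l) <-> exists a, In a l /\ usesP a.
Proof.
  induction l; simpl.
  - split; [tauto| intros [a [[] _]]].
  - simpl in IHl. rewrite IHl. split.
    + intros [H|[b [H1 H2]]]; eauto.
    + intros [b [[<-|H1] H2]]; eauto.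
Qed.

Lemma occ_Fn x f l h : occ x (Fn f l) (S h) <-> exists a, In a l /\ occ x a h.
Proof.
  induction l; simpl.
  - split; [tauto| intros [a [[] _]]].
  - simpl in IHl. rewrite IHl. split.
    + intros [H|[b [H1 H2]]]; eauto.
    + intros [b [[<-|H1] H2]]; eauto.
Qed.

Lemma cmap_noP s t : ~ usesP t -> cmap s t = t.
Proof.
  induction t using term_ind'; simpl; intros Hn; auto.
  - destruct c; simpl in *; try tauto; reflexivity.
  - f_equal; [apply IHt1|apply IHt2]; intro; apply Hn; tauto.
  - f_equal. rewrite Forall_forall in H.
    transitivity (map (fun x => x) l); [|apply map_id]. apply map_ext_in.
    intros a Ha. apply H; auto. intro Hu. apply Hn. apply (proj2 (usesP_Fn f l)). exists a; split; assumption.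
Qed.

Lemma usesP_rename r t : usesP (rename r t) <-> usesP t.
Proof.
  unfold rename.
  induction t using term_ind'; simpl; try tauto.
  - change (usesP (Fn f (map (subst (fun x => Var (r x))) l)) <-> usesP (Fn f l)).
    rewrite !usesP_Fn. rewrite Forall_forall in H. split.
    + intros [a [Ha Hu]]. apply in_map_iff in Ha as [b [<- Hb]].
      exists b; split; auto. apply H; auto.
    + intros [a [Ha Hu]]. exists (subst (fun x => Var (r x)) a).
      split; [apply in_map; auto| apply H; auto].
Qed.

Lemma occ_cmap s x t h : occ x (cmap s t) h <-> occ x t h.
Proof.
  revert h. induction t using term_ind'; intro h; simpl; try tauto.
  - destruct c; simpl; tauto.
  - destruct h; [tauto|]. rewrite IHt1, IHt2; tauto.
  - destruct h; [simpl; tauto|].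
    change (occ x (Fn f (map (cmap s) l)) (S h) <-> occ x (Fn f l) (S h)). rewrite !occ_Fn. rewrite Forall_forall in H. split.
    + intros [a [Ha Hu]]. apply in_map_iff in Ha as [b [<- Hb]].
      exists b; split; auto. apply H; auto.
    + intros [a [Ha Hu]]. exists (cmap s a).
      split; [apply in_map; auto| apply H; auto].
Qed.

Lemma rename_id t : rename (fun x => x) t = t.
Proof.
  unfold rename. induction t using term_ind'; simpl; auto.
  - f_equal; auto.
  - f_equal. rewrite Forall_forall in H.
    transitivity (map (fun x => x) l); [apply map_ext_in; auto | apply map_id].
Qed.

Definition psi (s : nat -> nat) (t : term) : term :=
  match t with Dot a b => Dot a (cmap s b) | _ => cmap s t end.

Definition psiF s (f : flow) : flow := (psi s (fst f), psi s (snd f)).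

Definition headed (t : term) : Prop := exists c r, t = Dot (Cst c) r.
Definition headedF (f : flow) : Prop := headed (fst f) /\ headed (snd f).

Lemma occ_psi s x t h : occ x (psi s t) h <-> occ x t h.
Proof.
  destruct t; try apply occ_cmap. simpl. destruct h; [tauto|].
  rewrite occ_cmap. tauto.
Qed.

Lemma var_in_psi s x t : var_in x (psi s t) <-> var_in x t.
Proof. unfold var_in. split; intros [h H]; exists h; apply occ_psi in H || apply occ_psi; auto. Qed.

Lemma psi_rename s r t : psi s (rename r t) = rename r (psi s t).
Proof.
  destruct t; unfold rename; simpl; auto.
  - destruct c; reflexivity.
  - f_equal. apply cmap_subst.
  - f_equal. rewrite !map_map. apply map_ext. intro a. apply cmap_subst.
Qed.

Lemma headed_subst th t : headed t -> headed (subst th t).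
Proof. intros [c [r ->]]. simpl. exists c, (subst th r). reflexivity. Qed.

Lemma headed_rename s t : headed t -> headed (rename s t).
Proof. apply headed_subst. Qed.

Lemma psi_subst_headed s th t : headed t ->
  psi s (subst th t) = subst (fun x => cmap s (th x)) (psi s t).
Proof. intros [c [r ->]]. simpl. f_equal. apply cmap_subst. Qed.

Lemma mgu_psi s s' th a b :
  (forall n, s' (s n) = n) -> (forall n, s (s' n) = n) ->
  headed a -> headed b -> mgu th a b -> mgu (fun x => cmap s (th x)) (psi s a) (psi s b).
Proof.
  intros H1 H2 [c [ra ->]] [d [rb ->]] [Hu Hg]. unfold unifier in *. simpl in *.
  injection Hu as Hcd Hr. subst d. split.
  - unfold unifier; simpl. rewrite <- !cmap_subst. congruence.
  - intros th' Hu'. simpl in Hu'. injection Hu' as Hr'.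
    destruct (Hg (fun x => cmap s' (th' x))) as [eta Heta].
    + simpl. f_equal. apply (f_equal (cmap s')) in Hr'.
      rewrite !cmap_subst, !cmap_comp in Hr' by auto. exact Hr'.
    + exists (fun y => cmap s (eta y)). intro x.
      rewrite <- (cmap_subst s eta (th x)). rewrite Heta. apply cmap_comp; auto.
Qed.

Lemma flow_prod_psi s s' f g h :
  (forall n, s' (s n) = n) -> (forall n, s (s' n) = n) ->
  headedF f -> headedF g -> flow_prod f g h -> headedF h /\ flow_prod (psiF s f) (psiF s g) (psiF s h).
Proof.
  intros H1 H2 [Hf1 Hf2] [Hg1 Hg2] [s1 [s2 [Hs1 [Hs2 [Hd [th [Hm [r [Hr Heq]]]]]]]]].
  subst h. simpl. split.
  - split; simpl; apply headed_rename, headed_subst, headed_rename; auto.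
  - exists s1, s2. split; [auto|]. split; [auto|]. split.
    + simpl. rewrite <- !psi_rename. setoid_rewrite var_in_psi. exact Hd.
    + exists (fun x => cmap s (th x)). split.
      * simpl. rewrite <- !psi_rename. apply mgu_psi with s'; auto; apply headed_rename; auto.
      * exists r. split; auto. unfold psiF; simpl. rewrite !psi_rename.
        rewrite !psi_subst_headed by (apply headed_rename; auto).
        rewrite !psi_rename. reflexivity.
Qed.

Definition transf s (A B : wset) : Prop := forall f, A f -> headedF f /\ B (psiF s f).

Lemma transf_wprod s s' A B C D :
  (forall n, s' (s n) = n) -> (forall n, s (s' n) = n) ->
  transf s A B -> transf s C D -> transf s (wprod A C) (wprod B D).
Proof.
  intros H1 H2 HAB HCD h [f [g [Hf [Hg Hp]]]].
  destruct (HAB f Hf) as [hf Bf]. destruct (HCD g Hg) as [hg Dg].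
  destruct (flow_prod_psi s s' f g h H1 H2 hf hg Hp) as [hh Hp'].
  split; auto. exists (psiF s f), (psiF s g). auto.
Qed.

Lemma transf_wpow s s' A B n :
  (forall n, s' (s n) = n) -> (forall n, s (s' n) = n) ->
  transf s A B -> transf s (wpow A n) (wpow B n).
Proof.
  intros H1 H2 H. induction n; simpl; auto. apply transf_wprod with s'; auto.
Qed.

Lemma nil_transf s s' A B :
  (forall n, s' (s n) = n) -> (forall n, s (s' n) = n) ->
  transf s A B -> nilpotent B -> nilpotent A.
Proof.
  intros H1 H2 H [n Hn]. exists n. intros h Hh.
  apply (Hn (psiF s h)). apply (transf_wpow s s' A B n H1 H2 H); auto.
Qed.

Definition swap (a b x : nat) : nat :=
  if Nat.eqb x a then b else if Nat.eqb x b then a else x.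

Lemma swap_invol a b x : swap a b (swap a b x) = x.
Proof.
  unfold swap.
  destruct (Nat.eqb_spec x a) as [->|Hxa].
  - rewrite Nat.eqb_refl. destruct (Nat.eqb_spec b a); auto.
  - destruct (Nat.eqb_spec x b) as [->|Hxb].
    + destruct (Nat.eqb_spec a a); [|congruence]. auto.
    + destruct (Nat.eqb_spec x a); [congruence|]. destruct (Nat.eqb_spec x b); [congruence|]. auto.
Qed.

Fixpoint bij (q p : list nat) {struct q} : nat -> nat :=
  match q, p with
  | a :: q', b :: p' => fun x => swap a b (bij q' (map (swap a b) p') x)
  | _, _ => fun x => x
  end.

Fixpoint bijinv (q p : list nat) {struct q} : nat -> nat :=
  match q, p with
  | a :: q', b :: p' => fun x => bijinv q' (map (swap a b) p') (swap a b x)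
  | _, _ => fun x => x
  end.

Lemma bij_inv1 q : forall p x, bijinv q p (bij q p x) = x.
Proof. induction q; destruct p; simpl; auto. intro. rewrite swap_invol. apply IHq. Qed.

Lemma bij_inv2 q : forall p x, bij q p (bijinv q p x) = x.
Proof. induction q; destruct p; simpl; auto. intro. rewrite IHq. apply swap_invol. Qed.

Lemma swap_not_in a b x p : ~ In x p -> ~ In (swap a b x) (map (swap a b) p).
Proof.
  intros H Hi. apply in_map_iff in Hi as [y [Hy Hin]].
  apply (f_equal (swap a b)) in Hy. rewrite !swap_invol in Hy. subst; auto.
Qed.

Lemma bij_fix q : forall p x, ~ In x q -> ~ In x p -> bij q p x = x.
Proof.
  induction q; destruct p; simpl; auto. intros x Hq Hp.
  assert (Hs : swap a n x = x).
  { unfold swap. destruct (Nat.eqb_spec x a); [exfalso; auto|].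
    destruct (Nat.eqb_spec x n); [exfalso; auto|auto]. }
  rewrite IHq; auto.
  rewrite <- Hs at 1. apply swap_not_in. auto.
Qed.

Lemma bij_map q : forall p, NoDup q -> NoDup p -> length q = length p -> map (bij q p) q = p.
Proof.
  induction q; destruct p; simpl; try discriminate; auto.
  intros Hq Hp Hl. apply NoDup_cons_iff in Hq as [Ha Hq]. apply NoDup_cons_iff in Hp as [Hn Hp].
  f_equal.
  - rewrite bij_fix; auto.
    + unfold swap. rewrite Nat.eqb_refl. auto.
    + intro Hi. apply in_map_iff in Hi as [y [Hy Hin]].
      apply (f_equal (swap a n)) in Hy. rewrite swap_invol in Hy.
      unfold swap in Hy. rewrite Nat.eqb_refl in Hy. subst; auto.
  - rewrite <- (map_map (bij q (map (swap a n) p)) (swap a n)).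
    rewrite IHq; auto.
    + rewrite map_map. transitivity (map (fun x => x) p); [apply map_ext; apply swap_invol| apply map_id].
    + apply Injective_map_NoDup; auto. intros x y Hxy.
      apply (f_equal (swap a n)) in Hxy. rewrite !swap_invol in Hxy. auto.
    + rewrite length_map. lia.
Qed.

Lemma psi_side s c lr k : (lr = CL \/ lr = CR) -> psi s (side c lr k) = side c lr (s k).
Proof. intros [->| ->]; reflexivity. Qed.

Lemma headed_side c lr k : headed (side c lr k).
Proof. unfold side. eexists; eexists; reflexivity. Qed.

Lemma pos_map s q p n i : map s q = p -> length q = S n -> s (pos q i) = pos p i.
Proof.
  intros Hm Hl. unfold pos. subst p. rewrite length_map.
  assert (Hk : i mod length q < length q) by (apply Nat.mod_upper_bound; lia).
  rewrite (nth_indep (map s q) 0 (s 0)) by (rewrite length_map; auto).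
  rewrite map_nth. reflexivity.
Qed.

Lemma Wbar_map s W q p : map s q = p -> length q = S (length W) ->
  map (psiF s) (Wbar W q) = Wbar W p.
Proof.
  intros Hm Hl. unfold Wbar. rewrite concat_map, map_map. f_equal. apply map_ext. intro i.
  simpl. unfold psiF; simpl.
  rewrite !(pos_map s q p (length W)) by auto. reflexivity.
Qed.

Lemma headed_rename_flow (f : flow) r :
  headedF f -> headedF (rename r (fst f), rename r (snd f)).
Proof. intros [H1 H2]. split; apply headed_rename; auto. Qed.

Lemma psiF_rename s r (f : flow) :
  psiF s (rename r (fst f), rename r (snd f)) = (rename r (fst (psiF s f)), rename r (snd (psiF s f))).
Proof. unfold psiF; simpl. rewrite !psi_rename. reflexivity. Qed.

Lemma transf_Wbar s W q p : map s q = p -> length q = S (length W) ->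
  transf s (of_list (Wbar W q)) (of_list (Wbar W p)).
Proof.
  intros Hm Hl f [f0 [Hin [r [Hr ->]]]]. split.
  - apply headed_rename_flow. unfold Wbar in Hin.
    apply in_concat in Hin as [l [Hl1 Hl2]]. apply in_map_iff in Hl1 as [i [<- _]].
    simpl in Hl2. destruct Hl2 as [<-|[<-|[]]]; split; apply headed_side.
  - rewrite psiF_rename. exists (psiF s f0). split.
    + rewrite <- (Wbar_map s W q p) by auto. apply in_map; auto.
    + exists r; auto.
Qed.

Lemma tensorS_inv A B H f : tensorS A B H -> In f H ->
  exists H1 H2 a b s, A H1 /\ B H2 /\ In a H1 /\ In b H2 /\
    f = (rename s (fst (tensor_flow a b)), rename s (snd (tensor_flow a b))).
Proof.
  intros [ps [Hps Hw]] Hin.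
  assert (Hf : of_list H f).
  { exists f. split; auto. exists (fun x => x). split.
    - exists (fun x => x). auto.
    - rewrite !rename_id. destruct f; reflexivity. }
  apply Hw in Hf as [f1 [Hin1 [s [_ ->]]]].
  apply in_concat in Hin1 as [l [Hl Hf1]]. apply in_map_iff in Hl as [p [<- Hp]].
  unfold tensorW in Hf1. apply in_concat in Hf1 as [l [Hl Hf1]].
  apply in_map_iff in Hl as [a [<- Ha]]. apply in_map_iff in Hf1 as [b [<- Hb]].
  destruct (Hps p Hp). exists (fst p), (snd p), a, b, s. auto.
Qed.

Lemma rename_Dot s a b : rename s (Dot a b) = Dot (rename s a) (rename s b).
Proof. reflexivity. Qed.
Lemma rename_Cst s c : rename s (Cst c) = Cst c.
Proof. reflexivity. Qed.

Definition nfF (f : flow) : Prop := ~ usesP (fst f) /\ ~ usesP (snd f).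

Lemma nf_tensor (A B : semiring) :
  (forall H f, A H -> In f H -> nfF f) -> (forall H f, B H -> In f H -> nfF f) ->
  forall H f, tensorS A B H -> In f H -> nfF f.
Proof.
  intros HA HB H f HT Hin.
  destruct (tensorS_inv A B H f HT Hin) as [H1 [H2 [a [b [s [HA1 [HB2 [Ha [Hb ->]]]]]]]]].
  destruct (HA H1 a HA1 Ha) as [Ha1 Ha2]. destruct (HB H2 b HB2 Hb) as [Hb1 Hb2].
  unfold nfF, tensor_flow; cbn [fst snd]. rewrite !rename_Dot. cbn [usesP]. rewrite !usesP_rename. tauto.
Qed.

Lemma nf_Obs H f : Obs H -> In f H -> nfF f.
Proof.
  apply nf_tensor.
  - intros H1 g HC Hg. destruct (HC g Hg) as [[n1 E1] [n2 E2]]. unfold nfF. rewrite E1, E2. simpl. tauto.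
  - intros H1 g [HB HR] Hg. apply HR; auto.
Qed.

Lemma nf_mid H f : tensorS (Csr (fun t => t = Cst CL \/ t = Cst CR)) Obs H -> In f H -> nfF f.
Proof.
  apply nf_tensor.
  - intros H1 g HC Hg. destruct (HC g Hg) as [E1 E2]. unfold nfF.
    destruct E1 as [-> | ->]; destruct E2 as [-> | ->]; simpl; tauto.
  - apply nf_Obs.
Qed.

Definition goodT (t : term) : Prop := exists c r, t = Dot (Cst c) r /\ ~ usesP r.

Lemma goodT_rename s t : goodT t -> goodT (rename s t).
Proof.
  intros [c [r [-> Hr]]]. exists c, (rename s r). split; [reflexivity|].
  rewrite usesP_rename; auto.
Qed.

Lemma goodT_psi s t : goodT t -> psi s t = t.
Proof. intros [c [r [-> Hr]]]. simpl. rewrite cmap_noP; auto. Qed.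

Lemma goodT_headed t : goodT t -> headed t.
Proof. intros [c [r [-> _]]]. exists c, r. reflexivity. Qed.

Lemma O_good Sigma O f : Matr Sigma Obs O -> In f O -> goodT (fst f) /\ goodT (snd f).
Proof.
  intros HM Hin.
  destruct (tensorS_inv _ _ O f HM Hin) as [H1 [H2 [a [b [s [HA1 [HB2 [Ha [Hb ->]]]]]]]]].
  destruct (HA1 a Ha) as [[c1 [E1 _]] [c2 [E2 _]]].
  destruct (nf_mid H2 b HB2 Hb) as [Hb1 Hb2].
  unfold tensor_flow; cbn [fst snd]. rewrite E1, E2, !rename_Cst, !rename_Dot, !rename_Cst. split.
  - exists c1. eexists. split; [reflexivity|]. rewrite !usesP_rename. auto.
  - exists c2. eexists. split; [reflexivity|]. rewrite !usesP_rename. auto.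
Qed.

Lemma transf_O Sigma O s : Matr Sigma Obs O -> transf s (of_list O) (of_list O).
Proof.
  intros HM f [f0 [Hin [r [Hr ->]]]].
  destruct (O_good Sigma O f0 HM Hin) as [G1 G2].
  simpl. split.
  - split; apply goodT_headed, goodT_rename; auto.
  - unfold psiF; simpl. rewrite !goodT_psi by (apply goodT_rename; auto).
    exists f0. split; auto. exists r; auto.
Qed.

Theorem mainTheorem10 (Sigma : const -> Prop) (O : wiring) :
  ~ Sigma Star ->
  Matr Sigma Obs O ->
  forall W : list const,
    inL Sigma O W <->
    (word_over Sigma W /\
     exists ps : list nat, length ps = S (length W) /\ NoDup ps /\
       nilpotent (wprod (of_list O) (of_list (Wbar W ps)))).
Proof.
  intros _ HM W. split.
  - intros [Hw Hall]. split; auto. exists (seq 0 (S (length W))).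
    assert (Hl : length (seq 0 (S (length W))) = S (length W)) by apply length_seq.
    split; auto. split; [apply seq_NoDup|]. apply Hall; auto. apply seq_NoDup.
  - intros [Hw [ps0 [Hl0 [Hnd0 Hnil]]]]. split; auto. intros ps Hl Hnd.
    apply (nil_transf (bij ps ps0) (bijinv ps ps0) _ (wprod (of_list O) (of_list (Wbar W ps0)))
             (fun n => bij_inv1 ps ps0 n) (fun n => bij_inv2 ps ps0 n)); auto.
    apply transf_wprod with (bijinv ps ps0).
    + apply bij_inv1.
    + apply bij_inv2.
    + apply transf_O with Sigma; auto.
    + apply transf_Wbar; auto. apply bij_map; auto. congruence.
Qed.
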